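(* Let $x_1,\ldots,x_n\in\mathcal{X}$ be fixed points, $f$ a real function on $\mathcal{X}$, $h=(h_1,\ldots,h_m)^T$ real functions on $\mathcal{X}$, $\beta^\star\in\mathbb{R}^m$ with support $S^\star=\{k:\beta^\star_k\ne0\}$ of cardinality $\ell^\star\ge1$, $\overline{S^\star}=\{1,\ldots,m\}\setminus S^\star$, and $\lambda>0$. Let $H_c$ be the $n\times m$ column-centered matrix with entries $h_j(x_i)-n^{-1}\sum_{r}h_j(x_r)$, $H_{c,k}$ its $k$-th column, $H_{c,S^\star}$ the $n\times\ell^\star$ submatrix of columns indexed by $S^\star$, $f_c^{(n)}$ the centered vector with entries $f(x_i)-n^{-1}\sum_rf(x_r)$, and $\epsilon_c^{(n)}=f_c^{(n)}-H_c\beta^\star$. Suppose there exists $\nu>0$ such that $\|H_{c,S^\star}u\|_2^2\ge n\nu\|u\|_2^2$ for all $u\in\mathbb{R}^{\ell^\star}$, and there exists $\kappa\in(0,1]$ such that $$\frac{\ell^\star}{\nu n}\max_{k\in\overline{S^\star}}\max_{j\in S^\star}|H_{c,j}^TH_{c,k}|\le1-\kappa,\qquad\max_{k=1,\ldots,m}|H_{c,k}^T\epsilon_c^{(n)}|\le\tfrac12\kappa\lambda n.$$ Then the minimizer $\hat\beta^{\mathrm{lasso}}$ of $\beta\mapsto\frac{1}{2n}\|f_c^{(n)}-H_c\beta\|_2^2+\lambda\|\beta\|_1$ over $\mathbb{R}^m$ is unique, satisfies $\operatorname{supp}(\hat\beta^{\mathrm{lasso}})\subset S^\star$, and $$\max_{k\in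 S^\star}|\hat\beta^{\mathrm{lasso}}_k-\beta^\star_k|\le(1+\kappa/2)\sqrt{\ell^\star}\,\lambda/\nu.$$
   Context: $\operatorname{supp}(\beta)=\{j:\beta_j\neq0\}$. No probabilistic structure is involved: all quantities are deterministic. *)

(* Defs.v *)
From HB Require Import structures.
From mathcomp Require Import all_boot all_order all_algebra.
From mathcomp Require Import reals.
Set Implicit Arguments. Unset Strict Implicit. Unset Printing Implicit Defensive.
Import Order.TTheory GRing.Theory Num.Theory.
Local Open Scope ring_scope.

Section Lasso.
Variables (R : realType) (X : Type) (n m : nat).

Definition sqnorm (p : nat) (v : 'cV[R]_p) : R := \sum_(i < p) v i 0 ^+ 2.
Definition l1norm (p : nat) (v : 'cV[R]_p) : R := \sum_(i < p) `|v i 0|.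
Definition supp (p : nat) (v : 'cV[R]_p) : {set 'I_p} := [set k | v k 0 != 0].

Definition Hc (x : 'I_n -> X) (h : 'I_m -> X -> R) : 'M[R]_(n, m) :=
  \matrix_(i < n, j < m) (h j (x i) - n%:R^-1 * \sum_(r < n) h j (x r)).
Definition fc (x : 'I_n -> X) (f : X -> R) : 'cV[R]_n :=
  \col_(i < n) (f (x i) - n%:R^-1 * \sum_(r < n) f (x r)).
Definition epsc x f h (bstar : 'cV[R]_m) : 'cV[R]_n := fc x f - Hc x h *m bstar.

(* H_{c,S}: submatrix of the columns indexed by S (in increasing order) *)
Definition HcS x h (S : {set 'I_m}) : 'M[R]_(n, #|S|) :=
  colsub (fun i : 'I_#|S| => enum_val i) (Hc x h).

Definition colcol x h (j k : 'I_m) : R := \sum_(i < n) Hc x h i j * Hc x h i k.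
Definition colvec x h (k : 'I_m) (v : 'cV[R]_n) : R := \sum_(i < n) Hc x h i k * v i 0.

Definition lasso_obj x f h (lam : R) (b : 'cV[R]_m) : R :=
  (2 * n%:R)^-1 * sqnorm (fc x f - Hc x h *m b) + lam * l1norm b.

Definition is_lasso_min x f h lam (b : 'cV[R]_m) : Prop :=
  forall b' : 'cV[R]_m, lasso_obj x f h lam b <= lasso_obj x f h lam b'.

End Lasso.

(* Main.v *)
Require Import Defs.
From HB Require Import structures.
From mathcomp Require Import all_boot all_order all_algebra.
From mathcomp Require Import reals.
From mathcomp Require Import ring lra.
From mathcomp Require Import boolp classical_sets topology normedtype derive.
Import Order.TTheory GRing.Theory Num.Theory.
Import numFieldNormedType.Exports.
Local Open Scope classical_set_scope.
Local Open Scope ring_scope.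


Lemma box_min (R : realType) (m : nat) (g : 'rV[R]_m -> R) (M : R) :
  0 <= M -> continuous g ->
  exists c : 'rV[R]_m, (forall i, `|c 0 i| <= M) /\
    forall t : 'rV[R]_m, (forall i, `|t 0 i| <= M) -> g c <= g t.
Proof.
move=> M0 cg.
pose A := [set v : 'rV[R]_m | forall i, `[-M, M]%classic (v ord0 i)]%classic.
have A0 : (A !=set0)%classic.
  by exists (0 : 'rV[R]_m) => i /=; rewrite mxE in_itv /= lerNl oppr0 M0.
have cA : compact A := @rV_compact R m (fun=> `[-M, M]%classic) (fun=> @segment_compact R (-M) M).
have cgA : {within A, continuous g} by apply: continuous_subspaceT.
have [c cA' cmin] := EVT_min_rV A0 cA cgA.
have inA (t : 'rV[R]_m) : (forall i, `|t 0 i| <= M) <-> t \in A.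
  rewrite inE; split=> H i; first by rewrite /= in_itv /= -ler_norml.
  by have := H i; rewrite /= in_itv /= -ler_norml.
exists c; split; first by apply/inA.
by move=> t /inA; exact: cmin.
Qed.


Definition projS {R : realType} {m : nat} (S : {set 'I_m}) (v : 'rV[R]_m) : 'cV[R]_m :=
  \col_k (if k \in S then v 0 k else 0).

Lemma sum_cont (R : realType) (T : topologicalType) (I : finType) (F : I -> T -> R) :
  (forall i, continuous (F i)) -> continuous (fun v => \sum_i F i v).
Proof.
move=> cF; rewrite /index_enum; elim: (Finite.enum I) => [|i r IH].
  under eq_fun do rewrite big_nil; exact: cst_continuous.
under eq_fun do rewrite big_cons.
by move=> v; apply: continuousD; [exact: cF | exact: IH].
Qed.

Lemma sq_cont (R : realType) (T : topologicalType) (F : T -> R) w :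
  {for w, continuous F} -> {for w, continuous (fun v => F v ^+ 2)}.
Proof.
move=> cF; have -> : (fun v => F v ^+ 2) = F \* F by apply/funext=> v; rewrite expr2.
exact: continuousM.
Qed.

Lemma g_cont (R : realType) (X : Type) (n m : nat) (x : 'I_n -> X)
  (f : X -> R) (h : 'I_m -> X -> R) (lam : R) (S : {set 'I_m}) :
  continuous (fun v => lasso_obj x f h lam (projS S v)).
Proof.
have cproj k : continuous (fun v : 'rV[R]_m => projS S v k 0).
  have -> : (fun v : 'rV[R]_m => projS S v k 0) =
            (fun v => if k \in S then v 0 k else 0).
    by apply/funext => v; rewrite mxE.
  case: (k \in S); [exact: coord_continuous | exact: cst_continuous].
have cA i : continuous (fun v => (fc x f - Hc x h *m projS S v) i 0).
  have -> : (fun v => (fc x f - Hc x h *m projS S v) i 0) =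
     (fun v => fc x f i 0 - \sum_k Hc x h i k * projS S v k 0).
    by apply/funext => v; rewrite !mxE.
  move=> v; apply: (continuousB (f := fun=> fc x f i 0) (g := fun v => \sum_k Hc x h i k * projS S v k 0)); first exact: cst_continuous.
  move: v; apply: sum_cont => k w; apply: continuousM; first exact: cst_continuous.
  exact: cproj.
rewrite /lasso_obj /sqnorm /l1norm => v.
apply: (continuousD (f := fun v => (2 * n%:R)^-1 * \sum_i (fc x f - Hc x h *m projS S v) i 0 ^+ 2)
   (g := fun v => lam * \sum_k `|projS S v k 0|)).
  apply: (continuousM (s := fun=> _)); first exact: cst_continuous.
  move: v; apply: sum_cont => i w; apply: sq_cont; exact: cA.
apply: (continuousM (s := fun=> _)); first exact: cst_continuous.
move: v; apply: sum_cont => k w.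
apply: (continuous_comp (cproj k w)); exact: norm_continuous.
Qed.

Local Close Scope classical_set_scope.


Lemma mx_dot_exch (R : realType) p q (A : 'M[R]_(p, q)) (d : 'cV[R]_q) (w : 'cV[R]_p) :
  \sum_i (A *m d) i 0 * w i 0 = \sum_k d k 0 * \sum_i A i k * w i 0.
Proof.
under eq_bigr do rewrite mxE big_distrl /=.
rewrite exchange_big /=; apply: eq_bigr => k _; rewrite big_distrr /=.
by apply: eq_bigr => i _; rewrite mulrCA mulrA.
Qed.

Lemma sqnormB (R : realType) p (r w : 'cV[R]_p) :
  sqnorm (r - w) = sqnorm r - 2 * \sum_i r i 0 * w i 0 + sqnorm w.
Proof.
rewrite /sqnorm.
have -> : \sum_(i < p) (r - w) i 0 ^+ 2 =
  \sum_(i < p) (r i 0 ^+ 2 - 2 * (r i 0 * w i 0) + w i 0 ^+ 2).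
  by apply: eq_bigr => i _; rewrite !mxE; ring.
by rewrite big_split sumrB -mulr_sumr.
Qed.

Lemma sqnorm_ge0 {R : realType} {p : nat} (v : 'cV[R]_p) : 0 <= sqnorm v.
Proof. by rewrite /sqnorm; apply: sumr_ge0 => i _; exact: sqr_ge0. Qed.

Lemma sqnormZ (R : realType) p (a : R) (v : 'cV[R]_p) : sqnorm (a *: v) = a ^+ 2 * sqnorm v.
Proof. by rewrite /sqnorm mulr_sumr; apply: eq_bigr => i _; rewrite mxE exprMn. Qed.

Definition Gr {R : realType} {X : Type} {n m : nat} (x : 'I_n -> X)
  (f : X -> R) (h : 'I_m -> X -> R) (b : 'cV[R]_m) (k : 'I_m) : R :=
  n%:R^-1 * colvec x h k (fc x f - Hc x h *m b).

Lemma expand (R : realType) (X : Type) (n m : nat) (x : 'I_n -> X)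
  (f : X -> R) (h : 'I_m -> X -> R) (lam : R) (b c : 'cV[R]_m) : (0 < n)%N ->
  lasso_obj x f h lam c = lasso_obj x f h lam b
    + \sum_k (lam * (`|c k 0| - `|b k 0|) - (c k 0 - b k 0) * Gr x f h b k)
    + (2 * n%:R)^-1 * sqnorm (Hc x h *m (c - b)).
Proof.
move=> n0.
have nz : (n%:R : R) != 0 by rewrite pnatr_eq0 -lt0n.
rewrite /lasso_obj.
have -> : fc x f - Hc x h *m c = (fc x f - Hc x h *m b) - Hc x h *m (c - b).
  by rewrite mulmxBr opprB addrA subrK.
rewrite sqnormB.
have -> : \sum_(i < n) (fc x f - Hc x h *m b) i 0 * (Hc x h *m (c - b)) i 0
  = n%:R * \sum_(i < m) (c i 0 - b i 0) * Gr x f h b i.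
  rewrite (eq_bigr (fun i => (Hc x h *m (c - b)) i 0 * (fc x f - Hc x h *m b) i 0));
    last by move=> i _; rewrite mulrC.
  rewrite mx_dot_exch mulr_sumr; apply: eq_bigr => k _; rewrite /Gr /colvec !mxE.
  by field.
rewrite big_split /= sumrN -mulr_sumr /l1norm sumrB.
by field.
Qed.

Lemma limit0 (R : realType) (a C : R) : 0 <= C ->
  (forall eps, 0 < eps -> eps <= 1 -> 0 <= eps * a + eps ^+ 2 * C) -> 0 <= a.
Proof.
move=> C0 H; rewrite leNgt; apply/negP => a0.
have Ca : 0 < C - a by lra.
have := H (- a / (C - a)).
have e0 : 0 < - a / (C - a) by apply: divr_gt0; lra.
have e1 : - a / (C - a) <= 1 by rewrite ler_pdivrMr // mul1r; lra.
move=> /(_ e0 e1).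
have -> : - a / (C - a) * a + (- a / (C - a)) ^+ 2 * C = - a / (C - a) * (- a ^+ 2 / (C - a)).
  by field; rewrite subr_eq0; apply/eqP => E; move: Ca; rewrite E subrr ltxx.
rewrite pmulr_rge0 // mulNr oppr_ge0 => H2.
have A0 : 0 < a ^+ 2 by nra.
have := divr_gt0 A0 Ca; lra.
Qed.

Lemma abs_convex (R : realType) (b u e : R) : 0 <= e -> e <= 1 ->
  `|b + e * (u - b)| <= (1 - e) * `|b| + e * `|u|.
Proof.
move=> e0 e1.
have -> : b + e * (u - b) = (1 - e) * b + e * u by ring.
apply: le_trans (ler_normD _ _) _.
by rewrite !normrM (ger0_norm e0) ger0_norm // subr_ge0.
Qed.

Lemma coord_nec (R : realType) (X : Type) (n m : nat) (x : 'I_n -> X)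
  (f : X -> R) (h : 'I_m -> X -> R) (lam : R) (b : 'cV[R]_m) (j : 'I_m) (u : R) :
  (0 < n)%N -> 0 <= lam ->
  (forall eps, 0 < eps -> eps <= 1 ->
     lasso_obj x f h lam b <= lasso_obj x f h lam (b + (eps * (u - b j 0)) *: delta_mx j 0)) ->
  (u - b j 0) * Gr x f h b j <= lam * (`|u| - `|b j 0|).
Proof.
move=> n0 lam0 H.
rewrite -subr_ge0.
set C := (2 * n%:R)^-1 * sqnorm (Hc x h *m ((u - b j 0) *: (delta_mx j 0 : 'cV[R]_m))).
have C0 : 0 <= C.
  by apply: mulr_ge0; [rewrite invr_ge0 mulr_ge0 // ler0n | exact: sqnorm_ge0].
apply: (@limit0 R _ C C0) => eps e0 e1.
have := H eps e0 e1.
set c := b + _ *: _.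
rewrite (@expand R X n m x f h lam b c) //.
have cb : c - b = eps *: ((u - b j 0) *: delta_mx j 0) by rewrite /c addrC addKr scalerA.
rewrite cb -scalemxAr sqnormZ (bigD1 j) //= big1; last first.
  move=> k kj; rewrite /c !mxE (negbTE kj) /= mulr0 addr0.
  by rewrite !subrr mulr0 mul0r subrr.
rewrite addr0 /c !mxE eqxx /= mulr1.
have := @abs_convex R (b j 0) u eps (ltW e0) e1.
move=> cvx.
have cvx' : lam * (`|b j 0 + eps * (u - b j 0)| - `|b j 0|) <= lam * (eps * (`|u| - `|b j 0|)).
  apply: ler_wpM2l => //; lra.
set G := Gr x f h b j.
set S := sqnorm _.
have E : b j 0 + eps * (u - b j 0) - b j 0 = eps * (u - b j 0) by ring.
rewrite E.
have e1' : (2 * n%:R)^-1 * (eps ^+ 2 * S) = eps ^+ 2 * C by rewrite /C mulrCA.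
have e2' : lam * (eps * (`|u| - `|b j 0|)) - eps * (u - b j 0) * G = eps * (lam * (`|u| - `|b j 0|) - (u - b j 0) * G) by ring.
lra.
Qed.

Lemma suff_min (R : realType) (X : Type) (n m : nat) (x : 'I_n -> X)
  (f : X -> R) (h : 'I_m -> X -> R) (lam : R) (b : 'cV[R]_m) :
  (0 < n)%N ->
  (forall k t, (t - b k 0) * Gr x f h b k <= lam * (`|t| - `|b k 0|)) ->
  forall c, [/\ lasso_obj x f h lam b <= lasso_obj x f h lam c &
    (lasso_obj x f h lam c <= lasso_obj x f h lam b ->
      (forall k, lam * (`|c k 0| - `|b k 0|) - (c k 0 - b k 0) * Gr x f h b k = 0)
      /\ sqnorm (Hc x h *m (c - b)) = 0)].
Proof.
move=> n0 VI c.
rewrite (@expand R X n m x f h lam b c) //.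
set T := \sum_k _.
have T0 : 0 <= T by apply: sumr_ge0 => k _; rewrite subr_ge0; exact: VI.
have i0 : 0 < (2 * n%:R : R)^-1 by rewrite invr_gt0 mulr_gt0 // ltr0n.
have Q0 := sqnorm_ge0 (Hc x h *m (c - b) : 'cV[R]_n).
have Q0' := mulr_ge0 (ltW i0) Q0.
split; first lra.
move=> HH.
have T00 : T = 0 by lra.
have QQ : (2 * n%:R)^-1 * sqnorm (Hc x h *m (c - b)) = 0 by lra.
split.
  move=> k; move/eqP: T00; rewrite psumr_eq0 => [/allP/(_ k)|].
    by rewrite mem_index_enum /= => /(_ isT)/eqP.
  by move=> i _; rewrite subr_ge0; exact: VI.
by move/eqP: QQ; rewrite mulf_eq0 (gt_eqF i0) /= => /eqP.
Qed.

Lemma sum_S (R : realType) m (S : {set 'I_m}) (F : 'I_m -> R) :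
  (forall k, k \notin S -> F k = 0) ->
  \sum_(i < #|S|) F (enum_val i) = \sum_k F k.
Proof.
move=> F0; rewrite -(big_enum_val (A := mem S)) /=.
rewrite [RHS](bigID (mem S)) /= [X in _ = _ + X]big1 ?addr0 //.
Qed.

Lemma nu_conv (R : realType) (X : Type) (n m : nat) (x : 'I_n -> X)
  (h : 'I_m -> X -> R) (S : {set 'I_m}) (d : 'cV[R]_m) :
  (forall k, k \notin S -> d k 0 = 0) ->
  HcS x h S *m (\col_i d (enum_val i) 0) = Hc x h *m d /\
  sqnorm (\col_i d (enum_val i) 0 : 'cV[R]_#|S|) = sqnorm d.
Proof.
move=> d0; split.
  apply/matrixP => i j; rewrite (ord1 j) !mxE.
  rewrite (eq_bigr (fun k => Hc x h i (enum_val k) * d (enum_val k) 0)); last by move=> k _; rewrite !mxE.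
  by apply: (@sum_S R m S (fun k => Hc x h i k * d k 0)) => k /d0 ->; rewrite mulr0.
rewrite /sqnorm (eq_bigr (fun k => d (enum_val k) 0 ^+ 2)); last by move=> k _; rewrite !mxE.
by apply: (@sum_S R m S (fun k => d k 0 ^+ 2)) => k /d0 ->; rewrite expr0n.
Qed.

Lemma cauchy_S (R : realType) m (S : {set 'I_m}) (a : 'I_m -> R) :
  (forall k, k \notin S -> a k = 0) ->
  (\sum_k a k) ^+ 2 <= #|S|%:R * \sum_k a k ^+ 2.
Proof.
move=> a0.
have [S0|Spos] := posnP #|S|.
  have -> : \sum_k a k = 0.
    rewrite big1 // => k _; apply: a0; apply/negP => kS.
    by move: S0; rewrite (cardD1 k) kS.
  by rewrite expr0n /=; apply: mulr_ge0 => //; apply: sumr_ge0 => *; exact: sqr_ge0.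
set s := \sum_k a k; set l : R := #|S|%:R.
have l0 : 0 < l by rewrite ltr0n.
have H : 0 <= \sum_(k in S) (l * a k - s) ^+ 2 by apply: sumr_ge0 => k _; exact: sqr_ge0.
have E1 : \sum_(k in S) a k = s.
  by rewrite /s [RHS](bigID (mem S)) /= [X in _ = _ + X]big1 ?addr0 // => k /a0.
have E2 : \sum_(k in S) a k ^+ 2 = \sum_k a k ^+ 2.
  by rewrite [RHS](bigID (mem S)) /= [X in _ = _ + X]big1 ?addr0 // => k /a0 ->; rewrite expr0n.
have E3 : \sum_(k in S) (l * a k - s) ^+ 2 =
   l ^+ 2 * \sum_(k in S) a k ^+ 2 - 2 * l * s * \sum_(k in S) a k + l * s ^+ 2.
  rewrite (eq_bigr (fun k => l ^+ 2 * a k ^+ 2 - 2 * l * s * a k + s ^+ 2)); last by move=> k _; ring.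
  rewrite big_split sumrB /= -!mulr_sumr sumr_const /l -[in RHS]mulr_natl.
  by rewrite -mulr_natl; ring.
rewrite E3 E1 E2 in H.
have : 0 <= l * (l * \sum_k a k ^+ 2 - s ^+ 2) by rewrite -[X in _ <= X](subrK 0) ; nra.
by rewrite pmulr_rge0 // subr_ge0.
Qed.

Lemma term_le_sum (R : realType) p (F : 'I_p -> R) i :
  (forall j, 0 <= F j) -> F i <= \sum_j F j.
Proof.
by move=> F0; rewrite (bigD1 i) //= lerDl; apply: sumr_ge0 => j _; exact: F0.
Qed.

Lemma obj_ge (R : realType) (X : Type) (n m : nat) (x : 'I_n -> X)
  (f : X -> R) (h : 'I_m -> X -> R) (lam : R) (b : 'cV[R]_m) :
  0 <= lam -> lam * l1norm b <= lasso_obj x f h lam b.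
Proof.
move=> l0; rewrite /lasso_obj lerDr; apply: mulr_ge0; last exact: sqnorm_ge0.
by rewrite invr_ge0 mulr_ge0 // ler0n.
Qed.

Lemma l1_ge0 (R : realType) m (b : 'cV[R]_m) : 0 <= l1norm b.
Proof. by apply: sumr_ge0 => i _. Qed.

Lemma colvecB (R : realType) (X : Type) (n m : nat) (x : 'I_n -> X)
  (h : 'I_m -> X -> R) k (v w : 'cV[R]_n) :
  colvec x h k (v - w) = colvec x h k v - colvec x h k w.
Proof. by rewrite /colvec -sumrB; apply: eq_bigr => i _; rewrite !mxE mulrBr. Qed.

Lemma colvec_cc (R : realType) (X : Type) (n m : nat) (x : 'I_n -> X)
  (h : 'I_m -> X -> R) k (d : 'cV[R]_m) :
  colvec x h k (Hc x h *m d) = \sum_j d j 0 * colcol x h j k.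
Proof.
rewrite /colvec (eq_bigr (fun i => (Hc x h *m d) i 0 * (col k (Hc x h)) i 0)); last first.
  by move=> i _; rewrite mulrC !mxE.
rewrite mx_dot_exch; apply: eq_bigr => j _; congr (_ * _).
by rewrite /colcol; apply: eq_bigr => i _; rewrite !mxE.
Qed.

Lemma sqnorm_dot (R : realType) (X : Type) (n m : nat) (x : 'I_n -> X)
  (h : 'I_m -> X -> R) (d : 'cV[R]_m) :
  sqnorm (Hc x h *m d) = \sum_k d k 0 * colvec x h k (Hc x h *m d).
Proof.
rewrite /sqnorm (eq_bigr (fun i => (Hc x h *m d) i 0 * (Hc x h *m d) i 0)); last first.
  by move=> i _; rewrite expr2.
by rewrite mx_dot_exch.
Qed.

Theorem lemma9 (R : realType) (X : Type) (n m : nat) (x : 'I_n -> X)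
  (f : X -> R) (h : 'I_m -> X -> R) (bstar : 'cV[R]_m) (lam nu kappa : R) :
  (0 < n)%N ->
  (1 <= #|supp bstar|)%N ->
  0 < lam ->
  0 < nu ->
  (forall u : 'cV[R]_#|supp bstar|,
      sqnorm (HcS x h (supp bstar) *m u) >= n%:R * nu * sqnorm u) ->
  0 < kappa -> kappa <= 1 ->
  (forall k, k \notin supp bstar -> forall j, j \in supp bstar ->
      (#|supp bstar|%:R / (nu * n%:R)) * `|colcol x h j k| <= 1 - kappa) ->
  (forall k : 'I_m, `|colvec x h k (epsc x f h bstar)| <= 2^-1 * kappa * lam * n%:R) ->
  exists bhat : 'cV[R]_m,
    [/\ is_lasso_min x f h lam bhat,
        (forall b : 'cV[R]_m, is_lasso_min x f h lam b -> b = bhat),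
        supp bhat \subset supp bstar &
        (forall k, k \in supp bstar ->
           `|bhat k 0 - bstar k 0|
             <= (1 + kappa / 2) * Num.sqrt (#|supp bstar|%:R) * lam / nu)].
Proof.
move=> n0 l1 lam0 nu0 Hnu k0 k1 Hcc Heps.
set S := supp bstar.
have nR0 : (0 : R) < n%:R by rewrite ltr0n.
have lR0 : (0 : R) < #|S|%:R by rewrite ltr0n.
set O := lasso_obj x f h lam.
pose M := O 0 / lam.
have M0 : 0 <= M.
  apply: divr_ge0; last exact: ltW.
  apply: le_trans (@obj_ge R X n m x f h lam 0 (ltW lam0)); apply: mulr_ge0; [exact: ltW|exact: l1_ge0].
have [c0 [c0box c0min]] := @box_min R m _ M M0 (@g_cont R X n m x f h lam S).
set bt := projS S c0.
have btS k : k \notin S -> bt k 0 = 0 by move=> kS; rewrite /bt /projS mxE (negbTE kS).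
have rmin (c : 'cV[R]_m) : (forall k, k \notin S -> c k 0 = 0) -> O bt <= O c.
  move=> cS; case: (lerP (O c) (O 0)) => Hc.
    pose v : 'rV[R]_m := \row_k c k 0.
    have pv : projS S v = c.
      apply/matrixP => k j; rewrite (ord1 j) !mxE.
      by case: ifP => // /negbT /cS ->.
    rewrite -pv; apply: c0min => i; rewrite mxE.
    have := @obj_ge R X n m x f h lam c (ltW lam0); rewrite -/O => Hl.
    have Hci : `|c i 0| <= l1norm c by apply: (@term_le_sum R m (fun k => `|c k 0|)).
    rewrite /M ler_pdivlMr //; apply: le_trans Hc.
    apply: le_trans Hl; rewrite mulrC; apply: ler_wpM2l => //; exact: ltW.
  apply: le_trans (ltW Hc).
  have p0 : projS S (0 : 'rV[R]_m) = 0.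
    by apply/matrixP => k j; rewrite !mxE; case: ifP.
  rewrite -[X in _ <= O X]p0; apply: c0min => i; rewrite mxE normr0 //.
have VIS j u : j \in S -> (u - bt j 0) * Gr x f h bt j <= lam * (`|u| - `|bt j 0|).
  move=> jS; apply: coord_nec => //; first exact: ltW.
  move=> eps _ _; apply: rmin => k kS.
  rewrite !mxE (negbTE kS) add0r.
  have -> : (k == j) = false by apply/negbTE; apply: contraNneq kS => ->.
  by rewrite /= mulr0.
have GS j : j \in S -> `|Gr x f h bt j| <= lam.
  move=> jS; rewrite ler_norml; apply/andP; split.
    have := VIS j (bt j 0 - 1) jS.
    have : `|bt j 0 - 1| <= `|bt j 0| + 1 by apply: le_trans (ler_normB _ _) _; rewrite normr1.
    move=> H1 H2.
    have : lam * (`|bt j 0 - 1| - `|bt j 0|) <= lam * 1 by apply: ler_wpM2l; [exact: ltW|lra].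
    have E : (bt j 0 - 1 - bt j 0) = -1 by ring.
    rewrite E in H2.
    lra.
  have := VIS j (bt j 0 + 1) jS.
  have : `|bt j 0 + 1| <= `|bt j 0| + 1 by apply: le_trans (ler_normD _ _) _; rewrite normr1.
  move=> H1 H2.
  have : lam * (`|bt j 0 + 1| - `|bt j 0|) <= lam * 1 by apply: ler_wpM2l; [exact: ltW|lra].
  have E : (bt j 0 + 1 - bt j 0) = 1 by ring.
  rewrite E in H2.
  lra.
set D := bt - bstar.
have DS k : k \notin S -> D k 0 = 0.
  move=> kS; rewrite /D !mxE (negbTE kS).
  by move: kS; rewrite /S /supp inE negbK => /eqP ->; rewrite subrr.
set ep := epsc x f h bstar.
have Gform k : n%:R * Gr x f h bt k = colvec x h k ep - colvec x h k (Hc x h *m D).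
  rewrite /Gr mulrA mulfV ?mul1r ?gt_eqF // -colvecB; congr colvec.
  by rewrite /ep /epsc /D mulmxBr opprB addrA subrK.
set B := 1 + kappa / 2.
have wS j : j \in S -> `|colvec x h j (Hc x h *m D)| <= B * lam * n%:R.
  move=> jS.
  have E : colvec x h j (Hc x h *m D) = colvec x h j ep - n%:R * Gr x f h bt j by rewrite Gform; ring.
  rewrite E; apply: le_trans (ler_normB _ _) _.
  rewrite normrM (ger0_norm (ltW nR0)).
  have := Heps j; have := GS j jS => H1 H2.
  have : n%:R * `|Gr x f h bt j| <= n%:R * lam by apply: ler_wpM2l => //; exact: ltW.
  rewrite /B; lra.
set Q := sqnorm D.
set s := \sum_k `|D k 0|.
have Q0 : 0 <= Q by exact: sqnorm_ge0.
have s0 : 0 <= s by apply: sumr_ge0.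
have [HDeq HDsq] := @nu_conv R X n m x h S D DS.
have nuQ : n%:R * nu * Q <= B * lam * n%:R * s.
  have := Hnu (\col_i D (enum_val i) 0); rewrite HDeq HDsq -/Q => H1.
  apply: le_trans H1 _.
  rewrite sqnorm_dot /s mulr_sumr; apply: ler_sum => k _.
  have [kS|kS] := boolP (k \in S); last by rewrite DS // mul0r normr0 mulr0.
  apply: le_trans (ler_norm _) _; rewrite normrM mulrC; apply: ler_wpM2r => //.
  exact: wS.
have nuQ' : nu * Q <= B * lam * s.
  have : n%:R * (nu * Q) <= n%:R * (B * lam * s).
    have E1 : n%:R * (nu * Q) = n%:R * nu * Q by ring.
    have E2 : n%:R * (B * lam * s) = B * lam * n%:R * s by ring.
    by rewrite E1 E2.
  by rewrite ler_pM2l.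
have cs : s ^+ 2 <= #|S|%:R * Q.
  have aS : forall k, k \notin S -> `|D k 0| = 0 by move=> k kS; rewrite DS // normr0.
  have := @cauchy_S R m S (fun k => `|D k 0|) aS.
  have E : \sum_k `|D k 0| ^+ 2 = Q.
    by rewrite /Q /sqnorm; apply: eq_bigr => k _; rewrite real_normK // num_real.
  by rewrite E.
have B0 : 0 < B by rewrite /B; lra.
set K := B * lam.
have K0 : 0 < K by rewrite mulr_gt0.
have QK : nu ^+ 2 * Q <= K ^+ 2 * #|S|%:R.
  have [Qz|Qp] := eqVneq Q 0.
    by rewrite Qz mulr0; apply: mulr_ge0; [exact: sqr_ge0|exact: ltW].
  have Qp' : 0 < Q by rewrite lt0r Qp Q0.
  have H1 : (nu * Q) ^+ 2 <= (K * s) ^+ 2.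
    by rewrite ler_pXn2r // ?nnegrE ?mulr_ge0 // ltW.
  have H2 : (K * s) ^+ 2 <= K ^+ 2 * (#|S|%:R * Q) by rewrite exprMn ler_wpM2l // sqr_ge0.
  have : (nu ^+ 2 * Q) * Q <= (K ^+ 2 * #|S|%:R) * Q.
    have E1 : (nu * Q) ^+ 2 = nu ^+ 2 * Q * Q by ring.
    have E2 : K ^+ 2 * (#|S|%:R * Q) = K ^+ 2 * #|S|%:R * Q by ring.
    by rewrite -E1 -E2; exact: le_trans H1 H2.
  by rewrite ler_pM2r.
have sK : nu * s <= #|S|%:R * K.
  have : (nu * s) ^+ 2 <= (#|S|%:R * K) ^+ 2.
    have E : (nu * s) ^+ 2 = nu ^+ 2 * s ^+ 2 by ring.
    rewrite E; apply: le_trans (_ : nu ^+ 2 * s ^+ 2 <= nu ^+ 2 * (#|S|%:R * Q)) _.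
      by apply: ler_wpM2l => //; exact: sqr_ge0.
    have E2 : nu ^+ 2 * (#|S|%:R * Q) = #|S|%:R * (nu ^+ 2 * Q) by ring.
    rewrite E2; apply: le_trans (_ : #|S|%:R * (nu ^+ 2 * Q) <= #|S|%:R * (K ^+ 2 * #|S|%:R)) _.
      by apply: ler_wpM2l => //; exact: ltW.
    have E3 : #|S|%:R * (K ^+ 2 * #|S|%:R) = (#|S|%:R * K) ^+ 2 by ring.
    by rewrite E3.
  have a0 : 0 <= nu * s by apply: mulr_ge0 => //; exact: ltW.
  have b0 : 0 <= #|S|%:R * K by apply: mulr_ge0; exact: ltW.
  move=> H; nra.
have GoffS k : k \notin S -> `|Gr x f h bt k| <= lam * (1 - kappa ^+ 2 / 2).
  move=> kS.
  have Dc : (1 - kappa) * (nu * n%:R) / #|S|%:R * s <= (1 - kappa) * n%:R * K.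
    have k1' : 0 <= 1 - kappa by lra.
    have E : (1 - kappa) * (nu * n%:R) / #|S|%:R * s
        = (1 - kappa) * n%:R * (#|S|%:R^-1 * (nu * s)) by ring.
    rewrite E; apply: ler_wpM2l; first by apply: mulr_ge0 => //; exact: ltW.
    by rewrite ler_pdivrMl.
  have cc j : j \in S -> `|colcol x h j k| <= (1 - kappa) * (nu * n%:R) / #|S|%:R.
    move=> jS; have := Hcc k kS j jS.
    have a0 : 0 < #|S|%:R / (nu * n%:R) by apply: divr_gt0 => //; exact: mulr_gt0.
    rewrite -ler_pdivlMl // invf_div mulrC.
    by rewrite mulrA.
  have Hw : `|colvec x h k (Hc x h *m D)| <= (1 - kappa) * n%:R * K.
    apply: le_trans Dc; rewrite colvec_cc /s mulr_sumr.
    apply: le_trans (ler_norm_sum _ _ _) _; apply: ler_sum => j _.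
    have [jS|jS] := boolP (j \in S); last by rewrite DS // mul0r normr0 mulr0.
    rewrite normrM mulrC; apply: ler_wpM2r => //; exact: cc.
  have : n%:R * `|Gr x f h bt k| <= n%:R * (lam * (1 - kappa ^+ 2 / 2)).
    rewrite -(ger0_norm (ltW nR0)) -normrM Gform (ger0_norm (ltW nR0)).
    apply: le_trans (ler_normB _ _) _.
    have := Heps k; move: Hw; rewrite /K /B => H1 H2.
    have -> : n%:R * (lam * (1 - kappa ^+ 2 / 2)) =
       2^-1 * kappa * lam * n%:R + (1 - kappa) * n%:R * ((1 + kappa / 2) * lam) by field.
    exact: lerD.
  by rewrite ler_pM2l.
have GoffS' k : k \notin S -> `|Gr x f h bt k| < lam.
  move=> kS; apply: le_lt_trans (GoffS k kS) _.
  rewrite gtr_pMr // ltrBlDr ltrDl; apply: divr_gt0 => //; exact: exprn_gt0.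
have VI k t : (t - bt k 0) * Gr x f h bt k <= lam * (`|t| - `|bt k 0|).
  have [kS|kS] := boolP (k \in S); first exact: VIS.
  rewrite btS // subr0 normr0 subr0.
  apply: le_trans (ler_norm _) _; rewrite normrM mulrC; apply: ler_wpM2r => //.
  exact: ltW (GoffS' k kS).
have Hmin : is_lasso_min x f h lam bt by move=> c; have [] := @suff_min R X n m x f h lam bt n0 VI c.
exists bt; split => //.
- move=> c cmin.
  have [_ /(_ (cmin bt))[T0 Q00]] := @suff_min R X n m x f h lam bt n0 VI c.
  have cS k : k \notin S -> c k 0 = 0.
    move=> kS; have := T0 k; rewrite btS // normr0 !subr0 => /eqP; rewrite subr_eq0 => /eqP E.
    have : lam * `|c k 0| <= `|Gr x f h bt k| * `|c k 0|.
      by rewrite E -normrM mulrC; apply: ler_norm.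
    move=> H; apply/normr0_eq0/eqP; rewrite eq_le normr_ge0 andbT.
    have Gl := GoffS' k kS.
    have : (lam - `|Gr x f h bt k|) * `|c k 0| <= 0 by rewrite mulrBl subr_le0.
    by rewrite pmulr_rle0 // subr_gt0.
  have dS k : k \notin S -> (c - bt) k 0 = 0 by move=> kS; rewrite !mxE cS // (negbTE kS) subr0.
  have [E1 E2] := @nu_conv R X n m x h S (c - bt) dS.
  have := Hnu (\col_i (c - bt) (enum_val i) 0); rewrite E1 E2 Q00.
  have p0 : 0 < n%:R * nu by exact: mulr_gt0.
  move=> H.
  have Z : sqnorm (c - bt) = 0.
    by apply/eqP; rewrite eq_le sqnorm_ge0 andbT -(pmulr_rle0 _ p0).
  apply/matrixP => k j; rewrite (ord1 j); apply/eqP; rewrite -subr_eq0.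
  move/eqP: Z; rewrite /sqnorm psumr_eq0 => [/allP/(_ k (mem_index_enum _))|]; last first.
    by move=> *; exact: sqr_ge0.
  by rewrite /= sqrf_eq0 !mxE.
- apply/fintype.subsetP => k; rewrite [k \in supp bt]inE; apply: contraLR => kS.
  by rewrite negbK btS.
- move=> k kS.
  have Dk : D k 0 ^+ 2 <= Q by apply: (@term_le_sum R m (fun k => D k 0 ^+ 2)) => j; exact: sqr_ge0.
  have a0 : 0 <= nu * `|D k 0| by apply: mulr_ge0 => //; exact: ltW.
  have b0 : 0 <= K * Num.sqrt (#|S|%:R) by apply: mulr_ge0; [exact: ltW | exact: sqrtr_ge0].
  have sq : (nu * `|D k 0|) ^+ 2 <= (K * Num.sqrt (#|S|%:R)) ^+ 2.
    have E1 : (nu * `|D k 0|) ^+ 2 = nu ^+ 2 * D k 0 ^+ 2 by rewrite exprMn real_normK ?num_real.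
    have E2 : (K * Num.sqrt (#|S|%:R)) ^+ 2 = K ^+ 2 * #|S|%:R by rewrite exprMn sqr_sqrtr ?ler0n.
    rewrite E1 E2; apply: le_trans QK; apply: ler_wpM2l => //; exact: sqr_ge0.
  have H : nu * `|D k 0| <= K * Num.sqrt (#|S|%:R) by nra.
  have -> : bt k 0 - bstar k 0 = D k 0 by rewrite /D !mxE.
  rewrite ler_pdivlMr //.
  have E : B * Num.sqrt (#|S|%:R) * lam = K * Num.sqrt (#|S|%:R) by rewrite /K; ring.
  by rewrite E mulrC.
Qed.
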